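(* Let $G$ be a trigraph containing an OR gadget with inputs $V^1=\{x^1,y^1\}\cup V(F^1)$ and $V^2=\{x^2,y^2\}\cup V(F^2)$ (notation $a,b,c,d,e$ as in the context), where all fence gadgets involved satisfy the attachment rule in $G$. In any partial $4$-sequence from $G$, both the contraction merging $a$ and $b$ and the contraction merging $c$ and $d$ are preceded by the contraction merging $x^1$ and $y^1$ or by the contraction merging $x^2$ and $y^2$.
   Context: A trigraph $G$ consists of a vertex set $V(G)$ and two disjoint sets of unordered pairs of distinct vertices: black edges and red edges; the red graph is formed by the red edges. Contracting two distinct vertices $u,v$ replaces them by a new vertex $w$ such that, for every other vertex $z$, $wz$ is black if $uz,vz$ are both black, a non-edge if both are non-edges, and red otherwise. A partial $d$-sequence from $G$ is a sequence of trigraphs starting at $G$, each obtained from the previous by one contraction, all of maximum red degree at most $d$; each vertex of a later trigraph corresponds to the set (part) of vertices of $G$ merged into it, and ''the contraction merging $p$ and $q$'' is the contraction after which $p,q$ first lie in a common part. A fence gadget is a trigraph $F$ on $A\cup B$, $A=\{a_1,\dots,a_6\}$, $B=\{b_1,\dots,b_6\}$, whose black edges are those of the cycles $a_1a_2a_3a_4a_5a_6a_1$ and $b_1b_2b_3b_4b_5b_6b_1$ together with $b_1a_6$, and whose red edges are $a_ib_i$ for $i\in[6]$ and $a_ib_{i+1}$ for $i\in[5]$. Inside a trigraph $G$, $F$ is attached to a nonempty set $S\subseteq V(G)\setminus V(F)$ if every vertex of $A$ is joined by a black edge to every vertex of $S$ and no vertex of $B$ is adjacent to a vertex of $S$. $F$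 satisfies the attachment rule in $G$ if $V(F)$ is the vertex set of a connected component of the red graph of $G$ and there is a set $X\subseteq V(G)\setminus(V(F)\cup S)$ such that every vertex of $A$ has exactly $X\cup S$ as its set of neighbours outside $V(F)$, every vertex of $B$ has exactly $X$ as its set of neighbours outside $V(F)$ (all these edges black), and every vertex of $X$ is adjacent to every vertex of $S$. A vertical set is a set $\{x,y\}\cup V(F)$ where $F$ is a fence gadget attached to $\{x,y\}$; $\{x,y\}$ is its vertical pair. An OR gadget with inputs $V^1,V^2$ and output $V^3=\{x^3,y^3\}\cup V(F^3)$ (vertical sets) consists of: two vertical sets $\{a,b\}\cup V(F_{ab})$ and $\{c,d\}\cup V(F_{cd})$; black edges $ac$ and $bd$; a vertex $e$ adjacent exactly to $a$ and $c$ within the gadget; and a fence gadget $F_o$ attached to $\{a,b,c,d,e\}\cup V(F_{ab})\cup V(F_{cd})$. Furthermore $a$ is adjacent to $x^1$ and $y^1$ (not to $F^1$), $c$ is adjacent to $x^2$ and $y^2$ (not to $F^2$), and $x^3$ is adjacent to every vertex of the gadget (including $V(F_o)$), while $y^3$ has no neighbour in the gadget; there are no other edges between the gadget and $V^1\cup V^2\cup V^3$. *)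

(* Defs.v *)
From mathcomp Require Import all_boot.
Set Implicit Arguments. Unset Strict Implicit. Unset Printing Implicit Defensive.

Record trigraph (U : finType) := Trigraph {
  tV : {set U};
  tbl : rel U;
  trd : rel U }.

Section Trigraphs.
Variable U : finType.

Definition tadj (H : trigraph U) (x y : U) := tbl H x y || trd H x y.

Definition contract (H : trigraph U) (u v w : U) : trigraph U :=
  let V' := w |: ((tV H :\ u) :\ v) in
  Trigraph V'
    (fun x y => [&& x \in V', y \in V', x != y &
       if x == w then tbl H u y && tbl H v y
       else if y == w then tbl H x u && tbl H x v
       else tbl H x y])
    (fun x y => [&& x \in V', y \in V', x != y &
       if x == w then ~~ (tbl H u y && tbl H v y) && (tadj H u y || tadj H v y)
       else if y == w then ~~ (tbl H x u && tbl H x v) && (tadj H x u || tadj H x v)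
       else trd H x y]).

Definition reddeg (H : trigraph U) (x : U) := #|[set y in tV H | trd H x y]|.
Definition maxreddeg_le (H : trigraph U) (d : nat) :=
  forall x, x \in tV H -> reddeg H x <= d.
End Trigraphs.

Section Sequences.
Variable T : finType.
Variables bl rd : rel T.

Definition adj (x y : T) := bl x y || rd x y.

Definition lift : trigraph {set T} :=
  Trigraph [set [set x] | x : T]
    (fun X Y => [exists x, exists y, [&& X == [set x], Y == [set y] & bl x y]])
    (fun X Y => [exists x, exists y, [&& X == [set x], Y == [set y] & rd x y]]).

(* A sequence of contractions is given by the pairs of (current) vertices
   that are contracted; each vertex of a trigraph of the sequence is named
   by its part (the set of vertices of G merged into it), so the new vertex
   created by contracting u and v is u :|: v. *)
Definition cstep (H : trigraph {set T}) (p : {set T} * {set T}) :=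
  contract H p.1 p.2 (p.1 :|: p.2).

(* the k-th trigraph of the sequence (k = 0 is G itself) *)
Definition trig (s : seq ({set T} * {set T})) (k : nat) :=
  foldl cstep lift (take k s).

Definition partial_seq (d : nat) (s : seq ({set T} * {set T})) : Prop :=
  forall k, k <= size s ->
    maxreddeg_le (trig s k) d /\
    (k < size s ->
       let p := nth (set0, set0) s k in
       [/\ p.1 \in tV (trig s k), p.2 \in tV (trig s k) & p.1 != p.2]).

Definition merged (s : seq ({set T} * {set T})) (k : nat) (p q : T) :=
  [exists X in tV (trig s k), (p \in X) && (q \in X)].

(* Fence gadgets: a_1..a_6 = fA 0..5, b_1..b_6 = fB 0..5.              *)
Record fence := Fence { fA : 'I_6 -> T; fB : 'I_6 -> T }.

Definition VF (F : fence) : {set T} :=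
  [set fA F i | i : 'I_6] :|: [set fB F i | i : 'I_6].

Definition cyc6 (i j : 'I_6) :=
  (val j == (val i).+1 %% 6) || (val i == (val j).+1 %% 6).

Definition is_fence (F : fence) : Prop :=
  [/\ injective (fA F), injective (fB F),
      (forall i j, fA F i != fB F j) &
    [/\
      (forall i j, bl (fA F i) (fA F j) = cyc6 i j /\ rd (fA F i) (fA F j) = false),
      (forall i j, bl (fB F i) (fB F j) = cyc6 i j /\ rd (fB F i) (fB F j) = false) &
      (forall i j, bl (fA F i) (fB F j) = (val i == 5) && (val j == 0) /\
                   rd (fA F i) (fB F j) = (val j == val i) || (val j == (val i).+1))]].

Definition attached (F : fence) (S : {set T}) : Prop :=
  [/\ S != set0, [disjoint S & VF F] &
      forall i s, s \in S -> bl (fA F i) s /\ ~~ adj (fB F i) s].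

Definition attach_rule (F : fence) (S : {set T}) : Prop :=
  (exists x, [set y | connect rd x y] = VF F) /\
  exists X : {set T},
    [/\ [disjoint X & VF F :|: S],
        (forall i z, z \notin VF F ->
           (adj (fA F i) z = (z \in X :|: S)) /\ (adj (fA F i) z -> bl (fA F i) z)),
        (forall i z, z \notin VF F ->
           (adj (fB F i) z = (z \in X)) /\ (adj (fB F i) z -> bl (fB F i) z)) &
        (forall x z, x \in X -> z \in S -> adj x z)].

Definition vertical (x y : T) (F : fence) : Prop :=
  [/\ x != y, is_fence F & attached F [set x; y]].

Definition Vset (x y : T) (F : fence) : {set T} := [set x; y] :|: VF F.

Definition or_S (a b c d e : T) (Fab Fcd : fence) : {set T} :=
  [set a; b; c; d; e] :|: VF Fab :|: VF Fcd.

Definition or_W (a b c d e : T) (Fab Fcd Fo : fence) : {set T} :=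
  or_S a b c d e Fab Fcd :|: VF Fo.

Definition or_gadget (x1 y1 : T) (F1 : fence) (x2 y2 : T) (F2 : fence)
  (x3 y3 : T) (F3 : fence) (a b c d e : T) (Fab Fcd Fo : fence) : Prop :=
  let V1 := Vset x1 y1 F1 in
  let V2 := Vset x2 y2 F2 in
  let V3 := Vset x3 y3 F3 in
  let W := or_W a b c d e Fab Fcd Fo in
  let E u v := [|| (u == a) && (v == c), (u == b) && (v == d) |
                   (u == e) && ((v == a) || (v == c))] in
  [/\ vertical x1 y1 F1, vertical x2 y2 F2, vertical x3 y3 F3,
      [/\ [disjoint V1 & V2], [disjoint V1 & V3] & [disjoint V2 & V3]] &
  [/\
      [/\ vertical a b Fab, vertical c d Fcd, is_fence Fo &
          attached Fo (or_S a b c d e Fab Fcd)],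
      [/\ uniq [:: a; b; c; d; e], [disjoint VF Fab & VF Fcd],
          [disjoint [set a; b; c; d; e] & VF Fab :|: VF Fcd],
          [disjoint VF Fo & or_S a b c d e Fab Fcd] &
          [disjoint W & V1 :|: V2 :|: V3]],
      (forall u v, u \in [set a; b; c; d; e] -> v \in [set a; b; c; d; e] ->
         adj u v = E u v || E v u /\ (adj u v -> bl u v)),
      (forall v, v \in VF Fab :|: VF Fcd -> ~~ adj e v) &
      (forall g v, g \in W -> v \in V1 :|: V2 :|: V3 ->
         adj g v = [|| (g == a) && (v \in [set x1; y1]),
                       (g == c) && (v \in [set x2; y2]) | v == x3]
         /\ (adj g v -> bl g v))]].

End Sequences.

(* Main.v *)
Require Import Defs.
From mathcomp Require Import all_boot.
Set Implicit Arguments. Unset Strict Implicit. Unset Printing Implicit Defensive.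

Definition I12 : finType := ('I_6 + 'I_6)%type.
Definition mbl (z w : I12) := match z, w with
 | inl i, inl j => cyc6 i j | inr i, inr j => cyc6 i j
 | inl i, inr j => (val i == 5) && (val j == 0)
 | inr j, inl i => (val i == 5) && (val j == 0) end.
Definition mrd (z w : I12) := match z, w with
 | inl i, inr j => (val j == val i) || (val j == (val i).+1)
 | inr j, inl i => (val j == val i) || (val j == (val i).+1)
 | _, _ => false end.
Definition side (z : I12) := if z is inl _ then true else false.
Definition madj z w := mbl z w || mrd z w.
Definition mdist z z' w := (madj z w != madj z' w) || mrd z w || mrd z' w.
Definition mdistS z w := (side w != madj z w) || mrd z w.

Definition o6 (n : nat) (h : n < 6) : 'I_6 := Ordinal h.
Definition L6 := [:: @o6 0 isT; @o6 1 isT; @o6 2 isT; @o6 3 isT; @o6 4 isT; @o6 5 isT].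
Definition L12 : seq I12 := map inl L6 ++ map inr L6.

Lemma cnt1 : all (fun z => all (fun z' => (z != z') ==>
  (5 <= count (fun w => mdist z z' w && (w != z) && (w != z')) L12
        + (if side z != side z' then 2 else 0))) L12) L12.
Proof. by vm_compute. Qed.
Lemma cnt2 : all (fun z => 5 <= count (fun w => mdistS z w && (w != z)) L12) L12.
Proof. by vm_compute. Qed.
Lemma L12_uniq : uniq L12.
Proof. by vm_compute. Qed.
Lemma L12_all z : z \in L12.
Proof.
by case: z => [[i hi]|[i hi]]; do 6 (case: i hi => [|i] hi; [ apply/eqP; rewrite ?mem_cat ?in_cons ; by [] |]).
Qed.

Section Gen.
Variables (T : finType) (bl rd : rel T).
Hypothesis bl_rd : forall u v, ~~ (bl u v && rd u v).

Definition allbl (P Q : {set T}) := [forall p in P, forall q in Q, bl p q].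
Definition exadj (P Q : {set T}) := [exists p in P, exists q in Q, adj bl rd p q].

Definition Inv (H : trigraph {set T}) :=
 [/\ forall P, P \in tV H -> P != set0,
     forall P Q, P \in tV H -> Q \in tV H -> P != Q -> [disjoint P & Q],
     forall t, exists2 P, P \in tV H & t \in P,
     forall P Q, P \in tV H -> Q \in tV H -> P != Q -> tbl H P Q = allbl P Q &
     forall P Q, P \in tV H -> Q \in tV H -> P != Q ->
        trd H P Q = ~~ allbl P Q && exadj P Q].

Lemma allbl1 x y : allbl [set x] [set y] = bl x y.
Proof.
apply/forallP/idP => [/(_ x) | h p]; first by rewrite set11 /= => /forallP/(_ y); rewrite set11.
by apply/implyP; rewrite in_set1 => /eqP ->; apply/forallP => q; apply/implyP; rewrite in_set1 => /eqP ->.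
Qed.

Lemma exadj1 x y : exadj [set x] [set y] = adj bl rd x y.
Proof.
apply/existsP/idP => [[p /andP [] ] | h].
  rewrite in_set1 => /eqP -> /existsP [q /andP []]; by rewrite in_set1 => /eqP ->.
by exists x; rewrite set11 /=; apply/existsP; exists y; rewrite set11.
Qed.

Lemma Inv_lift : Inv (Defs.lift bl rd).
Proof.
split.
- by move=> P /imsetP [x _ ->]; apply/set0Pn; exists x; rewrite set11.
- move=> P Q /imsetP [x _ ->] /imsetP [y _ ->] ne.
  apply/pred0P => z /=; rewrite !in_set1; apply/negbTE; apply/negP => /andP [/eqP e1 /eqP e2].
  by move: ne; rewrite -e1 -e2 eqxx.
- by move=> t; exists [set t]; [apply/imsetP; exists t | rewrite set11].
- move=> P Q /imsetP [x _ ->] /imsetP [y _ ->] ne /=; rewrite allbl1.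
  apply/existsP/idP => [[x' /existsP [y' /and3P [/eqP /set1_inj <- /eqP /set1_inj <-]]] //|h].
  by exists x; apply/existsP; exists y; rewrite !eqxx.
- move=> P Q /imsetP [x _ ->] /imsetP [y _ ->] ne /=; rewrite allbl1 exadj1.
  apply/existsP/idP => [[x' /existsP [y' /and3P [/eqP /set1_inj <- /eqP /set1_inj <-]]] h|].
    by have := bl_rd x y; rewrite h andbT /adj h orbT => ->.
  rewrite /adj => /andP [nb]; rewrite (negbTE nb) /= => h.
  by exists x; apply/existsP; exists y; rewrite !eqxx.
Qed.

Lemma disjP (A B : {set T}) :
  (forall z, z \in A -> z \in B -> False) -> [disjoint A & B].
Proof. by move=> h; apply/pred0P => z /=; apply/negbTE/negP => /andP [] /h. Qed.

Lemma allblUl P1 P2 Q : allbl (P1 :|: P2) Q = allbl P1 Q && allbl P2 Q.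
Proof.
apply/forallP/andP => [h | [/forallP h1 /forallP h2] p].
  by split; apply/forallP => p; apply/implyP => hp; move: (h p); rewrite in_setU hp ?orbT.
by rewrite in_setU; apply/implyP => /orP [] hp; [move: (h1 p) | move: (h2 p)]; rewrite hp.
Qed.

Lemma allblUr P Q1 Q2 : allbl P (Q1 :|: Q2) = allbl P Q1 && allbl P Q2.
Proof.
apply/forallP/andP => [h | [/forallP h1 /forallP h2] p].
  have g : forall p q, p \in P -> q \in Q1 :|: Q2 -> bl p q.
    move=> p q hp hq; move: (h p); rewrite hp => /forallP /(_ q); by rewrite hq.
  split; apply/forallP => p; apply/implyP => hp; apply/forallP => q; apply/implyP => hq;
  apply: g => //; by rewrite in_setU hq ?orbT.
apply/implyP => hp; move: (h1 p) (h2 p); rewrite hp /= => /forallP g1 /forallP g2.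
apply/forallP => q; rewrite in_setU; apply/implyP => /orP [] hq;
  [move: (g1 q) | move: (g2 q)]; by rewrite hq.
Qed.

Lemma exadjUl P1 P2 Q : exadj (P1 :|: P2) Q = exadj P1 Q || exadj P2 Q.
Proof.
apply/existsP/orP => [[p /andP []]| [] /existsP [p /andP [hp h]]].
  by rewrite in_setU => /orP [] hp h; [left | right]; apply/existsP; exists p; rewrite hp.
  by exists p; rewrite in_setU hp.
by exists p; rewrite in_setU hp orbT.
Qed.

Lemma exadjUr P Q1 Q2 : exadj P (Q1 :|: Q2) = exadj P Q1 || exadj P Q2.
Proof.
apply/existsP/orP => [[p /andP [hp /existsP [q /andP []]]]| [] /existsP [p /andP [hp /existsP [q /andP [hq h]]]]].
  by rewrite in_setU => /orP [] hq h; [left | right]; apply/existsP; exists p;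
     rewrite hp /=; apply/existsP; exists q; rewrite hq.
  by exists p; rewrite hp; apply/existsP; exists q; rewrite in_setU hq.
by exists p; rewrite hp; apply/existsP; exists q; rewrite in_setU hq orbT.
Qed.

Lemma allbl_exadj P Q : P != set0 -> Q != set0 -> allbl P Q -> exadj P Q.
Proof.
move=> /set0Pn [p hp] /set0Pn [q hq] /forallP /(_ p); rewrite hp => /forallP /(_ q).
by rewrite hq /= => h; apply/existsP; exists p; rewrite hp; apply/existsP; exists q; rewrite hq /adj h.
Qed.

Lemma Inv_contract H p1 p2 : Inv H -> p1 \in tV H -> p2 \in tV H -> p1 != p2 ->
  Inv (contract H p1 p2 (p1 :|: p2)).
Proof.
move=> [hne hdis hcov hbl hrd] h1 h2 h12.
set w := p1 :|: p2.
have wold : forall Q, Q \in tV H -> Q != p1 -> Q != p2 -> Q != w.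
  move=> Q hQ n1 n2; apply/eqP => eQ.
  have := hdis _ _ hQ h1 n1; move: (hne _ h1) => /set0Pn [z hz].
  by move/disjointFr => /(_ z); rewrite eQ /w in_setU hz => /(_ isT).
have inV : forall X, X \in tV (contract H p1 p2 w) = (X == w) || [&& X != p2, X != p1 & X \in tV H].
  by move=> X; rewrite /= in_setU1 !in_setD1.
have tadjE : forall P Q, P \in tV H -> Q \in tV H -> P != Q -> tadj H P Q = exadj P Q.
  move=> P Q hP hQ n; rewrite /tadj hbl // hrd //.
  case e: (allbl P Q) => //=; by rewrite allbl_exadj // ?hne.
have wne : w != set0.
  by move: (hne _ h1) => /set0Pn [z hz]; apply/set0Pn; exists z; rewrite in_setU hz.
split.
- move=> X; rewrite inV => /orP [/eqP -> //| /and3P [_ _ ]]; exact: hne.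
- move=> X Y; rewrite !inV => /orP [/eqP -> | /and3P [x2 x1 hX]] /orP [/eqP -> | /and3P [y2 y1 hY]] //;
    first by rewrite eqxx.
  + move=> _; apply: disjP => z; rewrite /w in_setU => /orP [] hz hzY.
      by move: (disjointFr (hdis _ _ h1 hY ltac:(by rewrite eq_sym)) hz) ; rewrite hzY.
    by move: (disjointFr (hdis _ _ h2 hY ltac:(by rewrite eq_sym)) hz); rewrite hzY.
  + move=> _; apply: disjP => z hzX; rewrite /w in_setU => /orP [] hz.
      by move: (disjointFr (hdis _ _ h1 hX ltac:(by rewrite eq_sym)) hz); rewrite hzX.
    by move: (disjointFr (hdis _ _ h2 hX ltac:(by rewrite eq_sym)) hz); rewrite hzX.
  + exact: hdis.
- move=> t; case: (hcov t) => P hP tP.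
  case: (eqVneq P p1) => [e1 | n1]; first by exists w; rewrite ?inV ?eqxx // /w in_setU -e1 tP.
  case: (eqVneq P p2) => [e2 | n2]; first by exists w; rewrite ?inV ?eqxx // /w in_setU -e2 tP orbT.
  by exists P => //; rewrite inV n1 n2 hP orbT.
- move=> X Y hX hY n; move: (hX) (hY) => /= hX' hY'; rewrite /= hX' hY' n /=.
  move: hX hY n; rewrite !inV => /orP [/eqP -> | /and3P [x2 x1 hX]] /orP [/eqP -> | /and3P [y2 y1 hY]] n.
  + by rewrite eqxx in n.
  + by rewrite eqxx /w allblUl !hbl // eq_sym.
  + by rewrite (negbTE (wold _ hX x1 x2)) eqxx allblUr !hbl.
  + by rewrite (negbTE (wold _ hX x1 x2)) (negbTE (wold _ hY y1 y2)) hbl.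
- move=> X Y hX hY n; move: (hX) (hY) => /= hX' hY'; rewrite /= hX' hY' n /=.
  move: hX hY n; rewrite !inV => /orP [/eqP -> | /and3P [x2 x1 hX]] /orP [/eqP -> | /and3P [y2 y1 hY]] n.
  + by rewrite eqxx in n.
  + by rewrite eqxx /w allblUl exadjUl !hbl // ?tadjE // eq_sym.
  + by rewrite (negbTE (wold _ hX x1 x2)) eqxx allblUr exadjUr !hbl // ?tadjE.
  + by rewrite (negbTE (wold _ hX x1 x2)) (negbTE (wold _ hY y1 y2)) hrd.
Qed.

Definition dist u v t := (adj bl rd u t != adj bl rd v t) || rd u t || rd v t.

Definition partof (H : trigraph {set T}) t := odflt set0 [pick X in tV H | t \in X].

Lemma partofP H t : Inv H -> partof H t \in tV H /\ t \in partof H t.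
Proof.
move=> [_ _ hcov _ _]; rewrite /partof; case: pickP => [X /andP [] //|] /= h.
by case: (hcov t) => P hP tP; move: (h P); rewrite hP tP.
Qed.

Lemma partof_uniq H t P : Inv H -> P \in tV H -> t \in P -> partof H t = P.
Proof.
move=> hI hP tP; case: (partofP t hI) => h1 h2.
apply/eqP; apply/negP => /negP n; case: hI => _ hdis _ _ _.
by move: (disjointFr (hdis _ _ h1 hP n) h2); rewrite tP.
Qed.

Lemma red_dist H W Q u v t : Inv H -> W \in tV H -> Q \in tV H -> W != Q ->
  u \in W -> v \in W -> t \in Q -> dist u v t -> trd H W Q.
Proof.
move=> [_ _ _ _ hrd] hW hQ n hu hv ht hd; rewrite hrd //.
have ex : forall z, z \in W -> adj bl rd z t -> exadj W Q.
  by move=> z hz hzt; apply/existsP; exists z; rewrite hz; apply/existsP; exists t; rewrite ht.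
have nb : forall z, z \in W -> ~~ bl z t -> ~~ allbl W Q.
  move=> z hz hzt; apply/negP => /forallP /(_ z); rewrite hz => /forallP /(_ t).
  by rewrite ht (negbTE hzt).
have rdnb : forall z, rd z t -> ~~ bl z t.
  by move=> z h; have := bl_rd z t; rewrite h andbT.
move: hd; rewrite /dist => /orP [/orP [hd | h] | h].
- case e: (adj bl rd u t); case e': (adj bl rd v t); rewrite e e' in hd => //.
    rewrite (nb v) ?(ex u) //.
    by apply/negP => hb; move: e'; rewrite /adj hb.
  rewrite (nb u) ?(ex v) //.
  by apply/negP => hb; move: e; rewrite /adj hb.
- by rewrite (nb u) ?(ex u) ?rdnb // /adj h orbT.
- by rewrite (nb v) ?(ex v) ?rdnb // /adj h orbT.
Qed.

Lemma red_lower H W ws : Inv H -> W \in tV H -> uniq ws ->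
 (forall t, t \in ws -> t \notin W) ->
 (forall t t' P, t \in ws -> t' \in ws -> P \in tV H -> t \in P -> t' \in P -> t = t') ->
 (forall t, t \in ws -> exists u, exists v, [/\ u \in W, v \in W & dist u v t]) ->
 size ws <= reddeg H W.
Proof.
move=> hI hW hu hnW hsep hd.
rewrite /reddeg cardE -(size_map (partof H)).
apply: uniq_leq_size.
  rewrite map_inj_in_uniq // => t t' ht ht' e.
  case: (partofP t hI) => h1 h2; case: (partofP t' hI) => h1' h2'.
  by apply: (hsep t t' (partof H t)) => //; rewrite e.
move=> Q /mapP [t ht ->]; rewrite mem_enum inE.
case: (partofP t hI) => h1 h2; rewrite h1 /=.
case: (hd t ht) => u [v [hu' hv' huv]].
apply: (red_dist hI hW h1 _ hu' hv' h2 huv).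
by apply/eqP => e; move: (hnW t ht); rewrite e h2.
Qed.
End Gen.

Section Fen.
Variables (T : finType) (bl rd : rel T).
Hypothesis bl_sym : symmetric bl.
Hypothesis rd_sym : symmetric rd.
Hypothesis bl_rd : forall u v, ~~ (bl u v && rd u v).
Local Notation adj := (adj bl rd).
Local Notation dist := (dist bl rd).

Definition fv (F : fence T) (z : I12) := match z with inl i => fA F i | inr j => fB F j end.

Lemma adj_sym : symmetric adj.
Proof. by move=> u v; rewrite /adj bl_sym rd_sym. Qed.

Lemma dist_sym u v t : dist u v t = dist v u t.
Proof. by rewrite /dist eq_sym -!orbA (orbC (rd u t)). Qed.

Lemma fence_rel F : is_fence bl rd F ->
  forall z w, bl (fv F z) (fv F w) = mbl z w /\ rd (fv F z) (fv F w) = mrd z w.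
Proof.
case=> _ _ _ [hA hB hAB] [i|i] [j|j] /=; first exact: hA.
- exact: hAB.
- by rewrite bl_sym rd_sym; exact: hAB.
- exact: hB.
Qed.

Lemma fence_adj F : is_fence bl rd F -> forall z w, adj (fv F z) (fv F w) = madj z w.
Proof. by move=> hF z w; rewrite /Defs.adj; case: (fence_rel hF z w) => -> ->. Qed.

Lemma fv_inj F : is_fence bl rd F -> injective (fv F).
Proof.
case=> iA iB dAB _ [i|i] [j|j] /= e.
- by rewrite (iA _ _ e).
- by move: (dAB i j); rewrite e eqxx.
- by move: (dAB j i); rewrite e eqxx.
- by rewrite (iB _ _ e).
Qed.

Lemma inVF F u : u \in VF F -> exists z, u = fv F z.
Proof.
rewrite /VF in_setU => /orP [] /imsetP [i _ ->]; first by exists (inl i).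
by exists (inr i).
Qed.

Lemma fv_VF F z : fv F z \in VF F.
Proof. by rewrite /VF in_setU; case: z => i /=; rewrite imset_f ?orbT. Qed.

Lemma att_rel F S : attached bl rd F S -> forall z x, x \in S ->
  [/\ adj (fv F z) x = side z, adj x (fv F z) = side z,
      rd (fv F z) x = false & rd x (fv F z) = false].
Proof.
case=> _ _ h [i|i] x hx /=; case: (h i x hx) => hb ha.
- have hr : rd (fA F i) x = false by have := bl_rd (fA F i) x; rewrite hb /= => /negbTE.
  have ha1 : adj (fA F i) x = true by rewrite /Defs.adj hb.
  by split => //; [rewrite adj_sym | rewrite rd_sym].
- move: ha; rewrite /Defs.adj negb_or => /andP [/negbTE b1 /negbTE r1].
  have b2 : bl x (fB F i) = false by rewrite bl_sym.
  have r2 : rd x (fB F i) = false by rewrite rd_sym.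
  by rewrite /Defs.adj b1 r1 b2 r2.
Qed.

Lemma vert_facts x y F : vertical bl rd x y F ->
  [/\ x != y, is_fence bl rd F, attached bl rd F [set x; y], x \notin VF F & y \notin VF F].
Proof.
case=> nxy hF hat; split => //; case: (hat) => _ hd _.
  by apply/negP => hx; move: (disjointFr hd (set21 x y)); rewrite hx.
by apply/negP => hx; move: (disjointFr hd (set22 x y)); rewrite hx.
Qed.

Lemma vd_ff x y F z z' : vertical bl rd x y F -> z != z' ->
  exists ws, [/\ uniq ws, 5 <= size ws,
    (forall t, t \in ws -> [/\ t \in Vset x y F, t != fv F z & t != fv F z']) &
    (forall t, t \in ws -> dist (fv F z) (fv F z') t)].
Proof.
move=> hv nz; case: (vert_facts hv) => nxy hF hat nx ny.
set P := fun w => mdist z z' w && (w != z) && (w != z').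
exists (map (fv F) (filter P L12) ++ (if side z != side z' then [:: x; y] else [::])).
have inj := fv_inj hF.
split.
- rewrite cat_uniq map_inj_uniq // filter_uniq ?L12_uniq //.
  set M := map (fv F) _.
  case: ifP => _; last by [].
  rewrite /= in_cons in_nil !orbF andbT nxy andbT.
  apply/negP => /orP [] /mapP [w _ e].
    by move: nx; rewrite e fv_VF.
  by move: ny; rewrite e fv_VF.
- move/allP: cnt1 => /(_ z (L12_all z)) /allP /(_ z' (L12_all z')) /implyP /(_ nz).
  by rewrite size_cat size_map size_filter; case: ifP.
- move=> t; rewrite mem_cat => /orP [/mapP [w] | ].
    rewrite mem_filter /P => /andP [/andP [/andP [_ n1] n2] _] ->.
    by rewrite /Vset in_setU fv_VF orbT !(inj_eq inj).
  case: ifP => _ //; rewrite !in_cons in_nil orbF => /orP [] /eqP ->;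
  rewrite /Vset in_setU ?set21 ?set22 /=; split => //; apply/eqP => e;
    [ move: nx | move: nx | move: ny | move: ny]; by rewrite e fv_VF.
- move=> t; rewrite mem_cat => /orP [/mapP [w] | ].
    rewrite mem_filter /P => /andP [/andP [/andP [h _] _] _] ->.
    by rewrite /dist !fence_adj //; case: (fence_rel hF z w) => _ ->; case: (fence_rel hF z' w) => _ ->.
  case: ifP => // hs; rewrite !in_cons in_nil orbF => /orP [] /eqP ->; rewrite /dist.
    by case: (att_rel hat z (set21 x y)) => -> _ _ _; case: (att_rel hat z' (set21 x y)) => -> _ _ _; rewrite hs.
  by case: (att_rel hat z (set22 x y)) => -> _ _ _; case: (att_rel hat z' (set22 x y)) => -> _ _ _; rewrite hs.
Qed.

Lemma vd_sf x y F s z : vertical bl rd x y F -> s \in [set x; y] ->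
  exists ws, [/\ uniq ws, 5 <= size ws,
    (forall t, t \in ws -> [/\ t \in Vset x y F, t != s & t != fv F z]) &
    (forall t, t \in ws -> dist s (fv F z) t)].
Proof.
move=> hv hs; case: (vert_facts hv) => nxy hF hat nx ny.
set P := fun w => mdistS z w && (w != z).
exists (map (fv F) (filter P L12)).
have inj := fv_inj hF.
have nsv : forall w, s != fv F w.
  move=> w; apply/eqP => e; move: hs; rewrite e => /set2P [] e'.
    by move: nx; rewrite -e' fv_VF.
  by move: ny; rewrite -e' fv_VF.
split.
- by rewrite map_inj_uniq // filter_uniq ?L12_uniq.
- by move/allP: cnt2 => /(_ z (L12_all z)); rewrite size_map size_filter.
- move=> t /mapP [w]; rewrite mem_filter /P => /andP [/andP [_ n1] _] ->.
  by rewrite /Vset in_setU fv_VF orbT !(inj_eq inj) eq_sym nsv.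
- move=> t /mapP [w]; rewrite mem_filter /P => /andP [/andP [h _] _] ->.
  rewrite /dist fence_adj //; case: (fence_rel hF z w) => _ ->.
  by case: (att_rel hat w hs) => _ -> _ ->; rewrite orbF.
Qed.

Lemma vdist x y F u v : vertical bl rd x y F -> u \in Vset x y F -> v \in Vset x y F -> u != v ->
  ~~ ((u == x) && (v == y)) -> ~~ ((u == y) && (v == x)) ->
  exists ws, [/\ uniq ws, 5 <= size ws,
    (forall t, t \in ws -> [/\ t \in Vset x y F, t != u & t != v]) &
    (forall t, t \in ws -> dist u v t)].
Proof.
move=> hv hu hv0; case/setUP: hu => [hu | /inVF [z ->]]; case/setUP: hv0 => [hv' | /inVF [z' ->]] => nuv h1 h2.
- exfalso; move: hu hv' nuv h1 h2; rewrite !in_set2.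
  by case/orP => /eqP -> /orP [] /eqP ->; rewrite ?eqxx.
- exact: vd_sf.
- case: (vd_sf z hv hv') => ws [h3 h4 h5 h6]; exists ws; split => //.
    by move=> t /h5 [a b c].
  by move=> t ht; rewrite dist_sym h6.
- apply: vd_ff => //; by apply/eqP => e; move: nuv; rewrite e eqxx.
Qed.
End Fen.

Section Seq.
Variables (T : finType) (bl rd : rel T).
Hypothesis bl_sym : symmetric bl.
Hypothesis rd_sym : symmetric rd.
Hypothesis bl_rd : forall u v, ~~ (bl u v && rd u v).
Variable s : seq ({set T} * {set T}).
Hypothesis hs : partial_seq bl rd 4 s.
Local Notation tr := (trig bl rd s).
Local Notation mg := (merged bl rd s).
Local Notation adj := (adj bl rd).
Local Notation dist := (dist bl rd).

Definition pk k := nth (set0, set0) s k.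
Definition Wk k := (pk k).1 :|: (pk k).2.

Lemma trigS k : k < size s -> tr k.+1 = contract (tr k) (pk k).1 (pk k).2 (Wk k).
Proof. by move=> hk; rewrite /trig (take_nth (set0, set0) hk) foldl_rcons. Qed.

Lemma stepOK k : k < size s ->
  [/\ (pk k).1 \in tV (tr k), (pk k).2 \in tV (tr k) & (pk k).1 != (pk k).2].
Proof. by move=> hk; case: (hs (ltnW hk)) => _ /(_ hk). Qed.

Lemma InvT k : k <= size s -> Inv bl rd (tr k).
Proof.
elim: k => [_ | k IH hk]; first by rewrite /trig take0; exact: Inv_lift.
rewrite trigS //; case: (stepOK hk) => h1 h2 h12.
exact: Inv_contract (IH (ltnW hk)) h1 h2 h12.
Qed.

Lemma rdle k X : k <= size s -> X \in tV (tr k) -> reddeg (tr k) X <= 4.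
Proof. by move=> hk hX; case: (hs hk) => /(_ X hX). Qed.

Lemma inVS k X : k < size s -> X \in tV (tr k.+1) ->
  X = Wk k \/ [/\ X \in tV (tr k), X != (pk k).1 & X != (pk k).2].
Proof.
move=> hk; rewrite trigS //= in_setU1 !in_setD1 => /orP [/eqP -> | /and3P [a b c]]; first by left.
by right.
Qed.

Lemma oldS k X : k < size s -> X \in tV (tr k) -> X != (pk k).1 -> X != (pk k).2 ->
  X \in tV (tr k.+1).
Proof. by move=> hk hX a b; rewrite trigS //= in_setU1 !in_setD1 a b hX orbT. Qed.

Lemma WS k : k < size s -> Wk k \in tV (tr k.+1).
Proof. by move=> hk; rewrite trigS //= in_setU1 eqxx. Qed.

Lemma mergedP k p q : reflect (exists2 X, X \in tV (tr k) & (p \in X) && (q \in X)) (mg k p q).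
Proof. by apply: (iffP existsP) => [[X /andP [h1 h2]] | [X h1 h2]]; exists X => //; rewrite h1. Qed.

Lemma merged_mono k p q : k < size s -> mg k p q -> mg k.+1 p q.
Proof.
move=> hk /mergedP [X hX /andP [hp hq]]; apply/mergedP.
case: (eqVneq X (pk k).1) => [e | n1].
  by exists (Wk k); [exact: WS | rewrite /Wk !in_setU -e hp hq].
case: (eqVneq X (pk k).2) => [e | n2].
  by exists (Wk k); [exact: WS | rewrite /Wk !in_setU -e hp hq !orbT].
by exists X; [exact: oldS | rewrite hp].
Qed.

Lemma merged_le j k p q : j <= k -> k <= size s -> mg j p q -> mg k p q.
Proof.
move=> hjk; elim: k hjk => [|k IH]; first by rewrite leqn0 => /eqP ->.
rewrite leq_eqVlt => /orP [/eqP <- //| hjk] hk h.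
by apply: merged_mono => //; apply: IH => //; apply: ltnW.
Qed.

Lemma merged0 p q : mg 0 p q -> p = q.
Proof.
move/mergedP => [X]; rewrite /trig take0 /= => /imsetP [x _ ->].
by rewrite !in_set1 => /andP [/eqP -> /eqP ->].
Qed.

Lemma WkP k z : z \in Wk k -> z \in (pk k).1 \/ z \in (pk k).2.
Proof. by rewrite /Wk in_setU => /orP []; [left | right]. Qed.


Definition sepk k (A : pred T) := forall P u v, P \in tV (tr k) -> u \in P -> v \in P ->
  A u -> A v -> u = v.

Lemma no_red5 k W ws : k <= size s -> W \in tV (tr k) -> uniq ws -> 5 <= size ws ->
  (forall t, t \in ws -> t \notin W) -> sepk k (mem ws) ->
  (forall t, t \in ws -> exists u, exists v, [/\ u \in W, v \in W & dist u v t]) -> False.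
Proof.
move=> hk hW hu h5 hn hsep hd.
have := red_lower bl_rd (InvT hk) hW hu hn.
move=> /(_ (fun t t' P ht ht' hP h1 h2 => hsep P t t' hP h1 h2 ht ht') hd) h.
by move: (leq_trans h5 (leq_trans h (rdle hk hW))).
Qed.

Lemma sepS k (A : pred T) : k < size s -> sepk k A -> (forall t, A t -> t \notin Wk k) ->
  sepk k.+1 A.
Proof.
move=> hk hsep hn P u v hP hu hv hA hA'.
case: (inVS hk hP) => [e | [hP' _ _]]; last exact: (hsep P).
by move: (hn u hA); rewrite -e hu.
Qed.

Lemma vert_inv x y F : vertical bl rd x y F -> forall k, k <= size s -> ~~ mg k x y ->
  sepk k (mem (Vset x y F)).
Proof.
move=> hv; elim => [_ _ | k IH hk nm].
  move=> P u v; rewrite /trig take0 /= => /imsetP [z _ ->].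
  by rewrite !in_set1 => /eqP -> /eqP ->.
have nm' : ~~ mg k x y by apply/negP => /(merged_mono hk); apply/negP.
have IH' := IH (ltnW hk) nm'.
have main : forall u v, u \in (pk k).1 -> v \in (pk k).2 -> u \in Vset x y F -> v \in Vset x y F -> u = v.
  move=> u v hu hv' hU hV; case: (eqVneq u v) => // nuv; exfalso.
  case: (stepOK hk) => h1 h2 h12.
  have hW : forall z, z \in (pk k).1 -> z \in Wk k by move=> z hz; rewrite /Wk in_setU hz.
  have hW' : forall z, z \in (pk k).2 -> z \in Wk k by move=> z hz; rewrite /Wk in_setU hz orbT.
  have nxy : forall a b, a \in Wk k -> b \in Wk k -> a = x -> b = y -> False.
    move=> a b ha hb ea eb; move/negP: nm; apply; apply/mergedP; exists (Wk k); first exact: WS.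
    by rewrite -ea -eb ha hb.
  have n1 : ~~ ((u == x) && (v == y)).
    by apply/negP => /andP [/eqP a /eqP b]; apply: (nxy u v (hW _ hu) (hW' _ hv')).
  have n2 : ~~ ((u == y) && (v == x)).
    by apply/negP => /andP [/eqP a /eqP b]; apply: (nxy v u (hW' _ hv') (hW _ hu)).
  case: (vdist bl_sym rd_sym bl_rd hv hU hV nuv n1 n2) => ws [hu' h5 hin hd].
  have notW : forall t, t \in ws -> t \notin Wk k.
    move=> t ht; case: (hin t ht) => hT ntu ntv; apply/negP => /WkP [] htp.
      by move/eqP: ntu; apply; apply: (IH' _ _ _ h1 htp hu).
    by move/eqP: ntv; apply; apply: (IH' _ _ _ h2 htp hv').
  apply: (no_red5 hk (WS hk) hu' h5 notW).
    apply: sepS => //; move=> P a b hP ha hb ha' hb'.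
    by apply: (IH' P) => //; [case: (hin a ha') | case: (hin b hb')].
  by move=> t ht; exists u, v; split => //; [apply: hW | apply: hW' | apply: hd].
move=> P u v hP hu hv0 hU hV.
case: (inVS hk hP) => [e | [hP' _ _]]; last exact: (IH' P).
case: (stepOK hk) => h1 h2 h12.
move: hu hv0; rewrite e => /WkP [] hu /WkP [] hv1.
- exact: (IH' _ _ _ h1 hu hv1).
- exact: main.
- by symmetry; apply: main.
- exact: (IH' _ _ _ h2 hu hv1).
Qed.

Lemma L6_uniq : uniq L6. Proof. by vm_compute. Qed.
Lemma L6_all (i : 'I_6) : i \in L6.
Proof. by case: i => i hi; do 6 (case: i hi => [|i] hi; [apply/eqP; by [] |]). Qed.

Lemma six j Q (F' : fence T) z1 z2 (A : pred T) : j <= size s -> Q \in tV (tr j) ->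
  is_fence bl rd F' -> z1 \in Q -> z2 \in Q ->
  (forall i, adj z1 (fA F' i) != adj z2 (fA F' i)) -> (forall i, fA F' i \notin Q) ->
  sepk j A -> (forall i, A (fA F' i)) -> False.
Proof.
move=> hj hQ hF h1 h2 hd hn hsep hA.
have inj : injective (fA F') by case: hF.
apply: (@no_red5 j Q (map (fA F') L6)) => //.
- by rewrite map_inj_uniq // L6_uniq.
- by move=> t /mapP [i _ ->].
- move=> P u v hP hu hv hU hV; have : u \in map (fA F') L6 := hU; have : v \in map (fA F') L6 := hV.
  move=> /mapP [i' _ ev] /mapP [i _ eu]; subst u v; apply: (hsep P) => //.
- by move=> t /mapP [i _ ->]; exists z1, z2; split => //; rewrite /dist hd.
Qed.

Lemma key a b x y c d e (F Fab Fcd : fence T) :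
 vertical bl rd x y F -> vertical bl rd a b Fab -> vertical bl rd c d Fcd ->
 uniq [:: x; y; c; d; e] ->
 (forall t, t \in [:: x; y; c; d; e] -> adj a t != adj b t) ->
 (forall z i, z \in [:: x; y; c; d; e] -> ~~ adj z (fA Fab i)) ->
 (forall z i, z \in [:: c; d; e] -> ~~ adj z (fA F i)) ->
 (forall i, ~~ adj e (fA Fcd i)) ->
 forall k, k < size s -> mg k.+1 a b -> ~~ mg k a b -> ~~ mg k c d -> mg k x y.
Proof.
move=> vF vab vcd huq hab hnA hnF he k hk mab nab ncd.
case: (boolP (mg k x y)) => // nxy; exfalso.
have hk' := ltnW hk.
have sF := vert_inv vF hk' nxy.
have sab := vert_inv vab hk' nab.
have scd := vert_inv vcd hk' ncd.
case: (vert_facts vF) => _ fF atF nxF nyF.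
case: (vert_facts vab) => _ fab atab naF nbF.
case: (vert_facts vcd) => _ fcd atcd ncF ndF.
case: (stepOK hk) => h1 h2 h12.
have [ha hb] : a \in Wk k /\ b \in Wk k.
  case/mergedP: mab => X hX /andP [hXa hXb]; case: (inVS hk hX) => [e' | [hX' _ _]].
    by rewrite -e'.
  by move/negP: nab; case; apply/mergedP; exists X => //; rewrite hXa.
have inVs : forall (x' y' : T) (F' : fence T) z, z \in VF F' -> z \in Vset x' y' F'.
  by move=> x' y' F' z hz; rewrite /Vset in_setU hz orbT.
have inVx : forall (x' y' : T) (F' : fence T), x' \in Vset x' y' F'.
  by move=> x' y' F'; rewrite /Vset in_setU set21.
have inVy : forall (x' y' : T) (F' : fence T), y' \in Vset x' y' F'.
  by move=> x' y' F'; rewrite /Vset in_setU set22.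
have pab : forall P, P \in tV (tr k) -> a \in P \/ b \in P -> forall z, z \in VF Fab -> z \notin P.
  move=> P hP hab' z hz; apply/negP => hzP; case: hab' => hP'.
    by move: naF; rewrite -(sab P z a hP hzP hP' (inVs _ _ _ _ hz) (inVx _ _ _)) hz.
  by move: nbF; rewrite -(sab P z b hP hzP hP' (inVs _ _ _ _ hz) (inVy _ _ _)) hz.
have abparts : (a \in (pk k).1 \/ b \in (pk k).1) /\ (a \in (pk k).2 \/ b \in (pk k).2).
  have nsame : forall P, P \in tV (tr k) -> a \in P -> b \in P -> False.
    by move=> P hP hPa hPb; move/negP: nab; apply; apply/mergedP; exists P => //; rewrite hPa.
  case/WkP: ha => ha'; case/WkP: hb => hb'.
  - by exfalso; apply: (nsame _ h1).
  - by split; [left | right].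
  - by split; [right | left].
  - by exfalso; apply: (nsame _ h2).
have abnotW : forall z, z \in VF Fab -> z \notin Wk k.
  move=> z hz; apply/negP => /WkP [] hzp.
    by move: hzp; apply/negP; apply: (pab _ h1 abparts.1).
  by move: hzp; apply/negP; apply: (pab _ h2 abparts.2).
have sabVF : sepk k (mem (VF Fab)).
  by move=> P u v hP hu hv hU hV; apply: (sab P) => //; apply: inVs.
have adjAab : forall i, adj a (fA Fab i) = true.
  by move=> i; case: (att_rel bl_sym rd_sym bl_rd atab (inl i) (set21 a b)).
have notW : forall t, t \in [:: x; y; c; d; e] -> t \notin Wk k.
  move=> t ht; apply/negP => htW.
  apply: (@six k.+1 (Wk k) Fab a t (mem (VF Fab)) hk (WS hk) fab ha htW).
  - by move=> i; rewrite adjAab (negbTE (hnA t i ht)).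
  - by move=> i; apply: abnotW; apply: (fv_VF Fab (inl i)).
  - by apply: sepS => //.
  - by move=> i; apply: (fv_VF Fab (inl i)).
have adjF : forall z i, z \in [set x; y] -> adj z (fA F i) = true.
  by move=> z i hz; case: (att_rel bl_sym rd_sym bl_rd atF (inl i) hz).
have adjFcd : forall z i, z \in [set c; d] -> adj z (fA Fcd i) = true.
  by move=> z i hz; case: (att_rel bl_sym rd_sym bl_rd atcd (inl i) hz).
have g1 : forall P z1 z2, P \in tV (tr k) -> z1 \in P -> z2 \in P -> z1 \in [set x; y] ->
    z2 \in [:: c; d; e] -> False.
  move=> P z1 z2 hP hz1 hz2 hs1 hs2.
  apply: (@six k P F z1 z2 (mem (Vset x y F)) hk' hP fF hz1 hz2) => //.
  - by move=> i; rewrite adjF // (negbTE (hnF _ i hs2)).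
  - move=> i; apply/negP => hi.
    have hz1V : z1 \in Vset x y F by rewrite /Vset in_setU hs1.
    have := sF P _ _ hP hi hz1 (inVs _ _ _ _ (fv_VF F (inl i))) hz1V.
    move=> eq1; move: hs1; rewrite -eq1 => /set2P [] e1.
      by move: nxF; rewrite -e1 (fv_VF F (inl i)).
    by move: nyF; rewrite -e1 (fv_VF F (inl i)).
  - by move=> i; apply: inVs; apply: (fv_VF F (inl i)).
have g2 : forall P z1, P \in tV (tr k) -> z1 \in P -> e \in P -> z1 \in [set c; d] -> False.
  move=> P z1 hP hz1 hz2 hs1.
  apply: (@six k P Fcd z1 e (mem (Vset c d Fcd)) hk' hP fcd hz1 hz2) => //.
  - by move=> i; rewrite adjFcd // (negbTE (he i)).
  - move=> i; apply/negP => hi.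
    have hz1V : z1 \in Vset c d Fcd by rewrite /Vset in_setU hs1.
    have := scd P _ _ hP hi hz1 (inVs _ _ _ _ (fv_VF Fcd (inl i))) hz1V.
    move=> eq1; move: hs1; rewrite -eq1 => /set2P [] e1.
      by move: ncF; rewrite -e1 (fv_VF Fcd (inl i)).
    by move: ndF; rewrite -e1 (fv_VF Fcd (inl i)).
  - by move=> i; apply: inVs; apply: (fv_VF Fcd (inl i)).
have gxy : forall P, P \in tV (tr k) -> x \in P -> y \in P -> False.
  by move=> P hP hx hy; move/negP: nxy; apply; apply/mergedP; exists P => //; rewrite hx.
have gcd : forall P, P \in tV (tr k) -> c \in P -> d \in P -> False.
  by move=> P hP hx hy; move/negP: ncd; apply; apply/mergedP; exists P => //; rewrite hx.
have mx : x \in [set x; y] := set21 x y.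
have my : y \in [set x; y] := set22 x y.
have mc' : c \in [set c; d] := set21 c d.
have md' : d \in [set c; d] := set22 c d.
have mc : c \in [:: c; d; e] by rewrite in_cons eqxx.
have md : d \in [:: c; d; e] by rewrite !in_cons eqxx orbT.
have me : e \in [:: c; d; e] by rewrite !in_cons eqxx !orbT.
have sepW : sepk k (mem [:: x; y; c; d; e]).
  move=> P u v hP hu hv hU0 hV0; have hU1 : u \in [:: x; y; c; d; e] := hU0.
  have hV1 : v \in [:: x; y; c; d; e] := hV0; move: hU1 hV1; rewrite !in_cons in_nil !orbF => hU hV.
  move: hU hV => /orP [/eqP eu | /orP [/eqP eu | /orP [/eqP eu | /orP [/eqP eu | /eqP eu]]]]
    /orP [/eqP ev | /orP [/eqP ev | /orP [/eqP ev | /orP [/eqP ev | /eqP ev]]]];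
  subst u v => //; exfalso;
  first [ exact: (gxy P hP hu hv)
        | exact: (gxy P hP hv hu)
        | exact: (gcd P hP hu hv)
        | exact: (gcd P hP hv hu)
        | exact: (g1 P _ _ hP hu hv mx mc)
        | exact: (g1 P _ _ hP hu hv mx md)
        | exact: (g1 P _ _ hP hu hv mx me)
        | exact: (g1 P _ _ hP hu hv my mc)
        | exact: (g1 P _ _ hP hu hv my md)
        | exact: (g1 P _ _ hP hu hv my me)
        | exact: (g2 P _ hP hu hv mc')
        | exact: (g2 P _ hP hu hv md')
        | exact: (g1 P _ _ hP hv hu mx mc)
        | exact: (g1 P _ _ hP hv hu mx md)
        | exact: (g1 P _ _ hP hv hu mx me)
        | exact: (g1 P _ _ hP hv hu my mc)
        | exact: (g1 P _ _ hP hv hu my md)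
        | exact: (g1 P _ _ hP hv hu my me)
        | exact: (g2 P _ hP hv hu mc')
        | exact: (g2 P _ hP hv hu md') ].
have hd5 : forall t, t \in [:: x; y; c; d; e] ->
    exists u, exists v, [/\ u \in Wk k, v \in Wk k & dist u v t].
  by move=> t ht; exists a, b; split => //; rewrite /dist hab.
apply: (no_red5 hk (WS hk) huq _ notW (sepS hk sepW notW) hd5).
by [].
Qed.

End Seq.

Unset Implicit Arguments.

Theorem lemma4p13 (T : finType) (bl rd : rel T)
  (bl_sym : symmetric bl) (rd_sym : symmetric rd)
  (bl_irr : irreflexive bl) (rd_irr : irreflexive rd)
  (bl_rd : forall u v, ~~ (bl u v && rd u v))
  (x1 y1 x2 y2 x3 y3 a b c d e : T) (F1 F2 F3 Fab Fcd Fo : fence T)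
  (hOR : or_gadget bl rd x1 y1 F1 x2 y2 F2 x3 y3 F3 a b c d e Fab Fcd Fo)
  (r1 : attach_rule bl rd F1 [set x1; y1])
  (r2 : attach_rule bl rd F2 [set x2; y2])
  (r3 : attach_rule bl rd F3 [set x3; y3])
  (rab : attach_rule bl rd Fab [set a; b])
  (rcd : attach_rule bl rd Fcd [set c; d])
  (ro : attach_rule bl rd Fo (or_S a b c d e Fab Fcd))
  (s : seq ({set T} * {set T})) (hs : partial_seq bl rd 4 s) :
  forall k, k <= size s ->
    (merged bl rd s k a b ->
       exists2 j, j < k & merged bl rd s j x1 y1 \/ merged bl rd s j x2 y2) /\
    (merged bl rd s k c d ->
       exists2 j, j < k & merged bl rd s j x1 y1 \/ merged bl rd s j x2 y2).
Proof.
case: hOR => vF1 vF2 vF3 [d12 d13 d23] [[vab vcd fo ato] [uq dabcd dab5 dFo dW] hE he hG].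
set W := or_W a b c d e Fab Fcd Fo.
set V := Vset x1 y1 F1 :|: Vset x2 y2 F2 :|: Vset x3 y3 F3.
have noWV : forall z, z \in W -> z \in V -> False.
  by move=> z hz hv; move: (disjointFr dW hz); rewrite hv.
have inW5 : forall z, z \in [set a; b; c; d; e] -> z \in W.
  by move=> z hz; apply/setUP; left; apply/setUP; left; apply/setUP; left.
have inWab : forall i, fA Fab i \in W.
  by move=> i; apply/setUP; left; apply/setUP; left; apply/setUP; right; apply: (fv_VF Fab (inl i)).
have inWcd : forall i, fA Fcd i \in W.
  by move=> i; apply/setUP; left; apply/setUP; right; apply: (fv_VF Fcd (inl i)).
have inV1 : forall z, z \in Vset x1 y1 F1 -> z \in V by move=> z hz; apply/setUP; left; apply/setUP; left.
have inV2 : forall z, z \in Vset x2 y2 F2 -> z \in V by move=> z hz; apply/setUP; left; apply/setUP; right.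
have inV3 : forall z, z \in Vset x3 y3 F3 -> z \in V by move=> z hz; apply/setUP; right.
have Vx : forall (x y : T) (F : fence T), x \in Vset x y F by move=> *; apply/setUP; left; apply: set21.
have Vy : forall (x y : T) (F : fence T), y \in Vset x y F by move=> *; apply/setUP; left; apply: set22.
have VA : forall (x y : T) (F : fence T) i, fA F i \in Vset x y F.
  by move=> x y F i; apply/setUP; right; apply: (fv_VF F (inl i)).
have dV : forall (A B : {set T}) z, [disjoint A & B] -> z \in A -> z \in B -> False.
  by move=> A B z hd ha hb; move: (disjointFr hd ha); rewrite hb.
have m5a : a \in [set a; b; c; d; e] by rewrite !inE eqxx.
have m5b : b \in [set a; b; c; d; e] by rewrite !inE eqxx ?orbT.
have m5c : c \in [set a; b; c; d; e] by rewrite !inE eqxx ?orbT.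
have m5d : d \in [set a; b; c; d; e] by rewrite !inE eqxx ?orbT.
have m5e : e \in [set a; b; c; d; e] by rewrite !inE eqxx ?orbT.
move: (uq); rewrite /= !inE !negb_or.
move=> /and5P [/and4P [nab nac nad nae] /and3P [nbc nbd nbe] /andP [ncd nce] nde _].
have nba : b != a by rewrite eq_sym.
have nca : c != a by rewrite eq_sym.
have nda : d != a by rewrite eq_sym.
have nea : e != a by rewrite eq_sym.
have ncb : c != b by rewrite eq_sym.
have ndb : d != b by rewrite eq_sym.
have neb : e != b by rewrite eq_sym.
have ndc : d != c by rewrite eq_sym.
have nec : e != c by rewrite eq_sym.
have ned : e != d by rewrite eq_sym.
have NE := (negbTE nab, negbTE nac, negbTE nad, negbTE nae, negbTE nbc, negbTE nbd, negbTE nbe,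
  negbTE ncd, negbTE nce, negbTE nde, negbTE nba, negbTE nca, negbTE nda, negbTE nea,
  negbTE ncb, negbTE ndb, negbTE neb, negbTE ndc, negbTE nec, negbTE ned).
have A5 : forall u v, u \in [set a; b; c; d; e] -> v \in [set a; b; c; d; e] -> adj bl rd u v = _
  := fun u v hu hv => (hE u v hu hv).1.
have adj_ac : adj bl rd a c = true by rewrite A5 // ?NE ?eqxx.
have adj_bc : adj bl rd b c = false by rewrite A5 // ?NE ?eqxx.
have adj_ad : adj bl rd a d = false by rewrite A5 // ?NE ?eqxx.
have adj_bd : adj bl rd b d = true by rewrite A5 // ?NE ?eqxx.
have adj_ae : adj bl rd a e = true by rewrite A5 // ?NE ?eqxx.
have adj_be : adj bl rd b e = false by rewrite A5 // ?NE ?eqxx.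
have adj_ca : adj bl rd c a = true by rewrite A5 // ?NE ?eqxx.
have adj_da : adj bl rd d a = false by rewrite A5 // ?NE ?eqxx.
have adj_cb : adj bl rd c b = false by rewrite A5 // ?NE ?eqxx.
have adj_db : adj bl rd d b = true by rewrite A5 // ?NE ?eqxx.
have adj_ce : adj bl rd c e = true by rewrite A5 // ?NE ?eqxx.
have adj_de : adj bl rd d e = false by rewrite A5 // ?NE ?eqxx.
have G : forall g v, g \in W -> v \in V -> adj bl rd g v = _ := fun g v hg hv => (hG g v hg hv).1.
case: (vert_facts vF1) => nxy1 fF1 atF1 nx1 ny1.
case: (vert_facts vF2) => nxy2 fF2 atF2 nx2 ny2.
case: (vert_facts vF3) => nxy3 fF3 atF3 nx3 ny3.
case: (vert_facts vab) => _ fab atab naF nbF.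
case: (vert_facts vcd) => _ fcd atcd ncF ndF.
have n13 : forall z, z \in Vset x1 y1 F1 -> z != x3.
  by move=> z hz; apply/eqP => e'; apply: (dV _ _ z d13 hz); rewrite e'.
have n23 : forall z, z \in Vset x2 y2 F2 -> z != x3.
  by move=> z hz; apply/eqP => e'; apply: (dV _ _ z d23 hz); rewrite e'.
have n12 : forall z, z \in Vset x1 y1 F1 -> z \in [set x2; y2] = false.
  move=> z hz; apply/negP => hz2; apply: (dV _ _ z d12 hz).
  by apply/setUP; left.
have n21 : forall z, z \in Vset x2 y2 F2 -> z \in [set x1; y1] = false.
  move=> z hz; apply/negP => hz2; apply: (dV _ _ z d12 _ hz).
  by apply/setUP; left.
have nWV1 : forall z g, z \in Vset x1 y1 F1 -> g \in W -> z != g.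
  by move=> z g hz hg; apply/eqP => e'; apply: (noWV g hg); rewrite -e'; apply: inV1.
have nWV2 : forall z g, z \in Vset x2 y2 F2 -> g \in W -> z != g.
  by move=> z g hz hg; apply/eqP => e'; apply: (noWV g hg); rewrite -e'; apply: inV2.
have nF5 : forall (F : fence T) z, z \in VF F -> z \in [set a; b; c; d; e] -> F = Fab \/ F = Fcd -> False.
  move=> F z hz h5 hF; apply: (dV _ _ z dab5 h5); case: hF => eF; subst F; apply/setUP; by [left | right].
have Aab_a : forall i, fA Fab i == a = false.
  by move=> i; apply/negbTE/eqP => e'; apply: (nF5 Fab (fA Fab i) (fv_VF Fab (inl i))); rewrite ?e' //; left.
have Aab_c : forall i, fA Fab i == c = false.
  by move=> i; apply/negbTE/eqP => e'; apply: (nF5 Fab (fA Fab i) (fv_VF Fab (inl i))); rewrite ?e' //; left.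
have Acd_a : forall i, fA Fcd i == a = false.
  by move=> i; apply/negbTE/eqP => e'; apply: (nF5 Fcd (fA Fcd i) (fv_VF Fcd (inl i))); rewrite ?e' //; right.
have Acd_c : forall i, fA Fcd i == c = false.
  by move=> i; apply/negbTE/eqP => e'; apply: (nF5 Fcd (fA Fcd i) (fv_VF Fcd (inl i))); rewrite ?e' //; right.
have asym := adj_sym bl_sym rd_sym.
have attN : forall (F : fence T) (S : {set T}) z w i, attach_rule bl rd F S -> z \notin VF F ->
    z \notin S -> w \in S -> adj bl rd z w = false -> adj bl rd z (fA F i) = false.
  move=> F S z w i [_ [X [_ hA _ hXS]]] hz hzS hw hzw; rewrite asym.
  case: (hA i z hz) => -> _; rewrite in_setU (negbTE hzS) orbF; apply/negP => hzX.
  by move: (hXS z w hzX hw); rewrite hzw.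
have nVF : forall (F : fence T) z, z \in [set a; b; c; d; e] -> F = Fab \/ F = Fcd -> z \notin VF F.
  by move=> F z h5 hF; apply/negP => hz; apply: (nF5 F z hz h5 hF).
have fx1 : x1 \in Vset x1 y1 F1 := Vx _ _ _.
have fy1 : y1 \in Vset x1 y1 F1 := Vy _ _ _.
have fx2 : x2 \in Vset x2 y2 F2 := Vx _ _ _.
have fy2 : y2 \in Vset x2 y2 F2 := Vy _ _ _.
have e_x1a : (x1 == a) = false := negbTE (nWV1 _ _ fx1 (inW5 _ m5a)).
have e_x1b : (x1 == b) = false := negbTE (nWV1 _ _ fx1 (inW5 _ m5b)).
have e_x1c : (x1 == c) = false := negbTE (nWV1 _ _ fx1 (inW5 _ m5c)).
have e_x1d : (x1 == d) = false := negbTE (nWV1 _ _ fx1 (inW5 _ m5d)).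
have e_x1e : (x1 == e) = false := negbTE (nWV1 _ _ fx1 (inW5 _ m5e)).
have e_y1a : (y1 == a) = false := negbTE (nWV1 _ _ fy1 (inW5 _ m5a)).
have e_y1b : (y1 == b) = false := negbTE (nWV1 _ _ fy1 (inW5 _ m5b)).
have e_y1c : (y1 == c) = false := negbTE (nWV1 _ _ fy1 (inW5 _ m5c)).
have e_y1d : (y1 == d) = false := negbTE (nWV1 _ _ fy1 (inW5 _ m5d)).
have e_y1e : (y1 == e) = false := negbTE (nWV1 _ _ fy1 (inW5 _ m5e)).
have e_x2a : (x2 == a) = false := negbTE (nWV2 _ _ fx2 (inW5 _ m5a)).
have e_x2b : (x2 == b) = false := negbTE (nWV2 _ _ fx2 (inW5 _ m5b)).
have e_x2c : (x2 == c) = false := negbTE (nWV2 _ _ fx2 (inW5 _ m5c)).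
have e_x2d : (x2 == d) = false := negbTE (nWV2 _ _ fx2 (inW5 _ m5d)).
have e_x2e : (x2 == e) = false := negbTE (nWV2 _ _ fx2 (inW5 _ m5e)).
have e_y2a : (y2 == a) = false := negbTE (nWV2 _ _ fy2 (inW5 _ m5a)).
have e_y2b : (y2 == b) = false := negbTE (nWV2 _ _ fy2 (inW5 _ m5b)).
have e_y2c : (y2 == c) = false := negbTE (nWV2 _ _ fy2 (inW5 _ m5c)).
have e_y2d : (y2 == d) = false := negbTE (nWV2 _ _ fy2 (inW5 _ m5d)).
have e_y2e : (y2 == e) = false := negbTE (nWV2 _ _ fy2 (inW5 _ m5e)).
have NE2 := (e_x1a, e_x1b, e_x1c, e_x1d, e_x1e, e_y1a, e_y1b, e_y1c, e_y1d, e_y1e, e_x2a, e_x2b, e_x2c, e_x2d, e_x2e, e_y2a, e_y2b, e_y2c, e_y2d, e_y2e).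
have x1x3 := negbTE (n13 _ fx1).
have y1x3 := negbTE (n13 _ fy1).
have x2x3 := negbTE (n23 _ fx2).
have y2x3 := negbTE (n23 _ fy2).
have xy1 := negbTE nxy1.
have xy2 := negbTE nxy2.
have u1 : uniq [:: x1; y1; c; d; e].
  by rewrite /= !inE !NE2 xy1 /= !NE.
have u2 : uniq [:: x2; y2; a; b; e].
  by rewrite /= !inE !NE2 xy2 /= !NE.
have GA : forall (F : fence T) i, F = Fab \/ F = Fcd -> fA F i \in W.
  by move=> F i [] ->.
have B1 : forall t, t \in [:: x1; y1; c; d; e] -> adj bl rd a t != adj bl rd b t.
  move=> t; rewrite !in_cons in_nil orbF.
  move=> /orP [/eqP -> | /orP [/eqP -> | /orP [/eqP -> | /orP [/eqP -> | /eqP ->]]]];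
    rewrite ?adj_ac ?adj_bc ?adj_ad ?adj_bd ?adj_ae ?adj_be //;
    rewrite !G ?inW5 ?inV1 // ?NE ?eqxx ?set21 ?set22 ?x1x3 ?y1x3 //.
have B2 : forall t, t \in [:: x2; y2; a; b; e] -> adj bl rd c t != adj bl rd d t.
  move=> t; rewrite !in_cons in_nil orbF.
  move=> /orP [/eqP -> | /orP [/eqP -> | /orP [/eqP -> | /orP [/eqP -> | /eqP ->]]]];
    rewrite ?adj_ca ?adj_da ?adj_cb ?adj_db ?adj_ce ?adj_de //;
    rewrite !G ?inW5 ?inV2 // ?NE ?eqxx ?set21 ?set22 ?x2x3 ?y2x3 ?n21 //.
have inVFU1 : forall i, fA Fab i \in VF Fab :|: VF Fcd.
  by move=> i; apply/setUP; left; apply: (fv_VF Fab (inl i)).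
have inVFU2 : forall i, fA Fcd i \in VF Fcd :|: VF Fab.
  by move=> i; apply/setUP; left; apply: (fv_VF Fcd (inl i)).
have inVFU2' : forall i, fA Fcd i \in VF Fab :|: VF Fcd.
  by move=> i; apply/setUP; right; apply: (fv_VF Fcd (inl i)).
have C1 : forall z i, z \in [:: x1; y1; c; d; e] -> ~~ adj bl rd z (fA Fab i).
  move=> z i; rewrite !in_cons in_nil orbF.
  move=> /orP [/eqP -> | /orP [/eqP -> | /orP [/eqP -> | /orP [/eqP -> | /eqP ->]]]].
  - by rewrite asym G ?inWab ?inV1 // Aab_a Aab_c x1x3.
  - by rewrite asym G ?inWab ?inV1 // Aab_a Aab_c y1x3.
  - rewrite (attN Fab [set a; b] c b i rab) ?set22 //; first by apply: nVF => //; left.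
    by rewrite !inE !NE.
  - rewrite (attN Fab [set a; b] d a i rab) ?set21 //; first by apply: nVF => //; left.
    by rewrite !inE !NE.
  - by apply: he.
have C2 : forall z i, z \in [:: x2; y2; a; b; e] -> ~~ adj bl rd z (fA Fcd i).
  move=> z i; rewrite !in_cons in_nil orbF.
  move=> /orP [/eqP -> | /orP [/eqP -> | /orP [/eqP -> | /orP [/eqP -> | /eqP ->]]]].
  - by rewrite asym G ?inWcd ?inV2 // Acd_a Acd_c x2x3.
  - by rewrite asym G ?inWcd ?inV2 // Acd_a Acd_c y2x3.
  - rewrite (attN Fcd [set c; d] a d i rcd) ?set22 //; first by apply: nVF => //; right.
    by rewrite !inE !NE.
  - rewrite (attN Fcd [set c; d] b c i rcd) ?set21 //; first by apply: nVF => //; right.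
    by rewrite !inE !NE.
  - by apply: he.
have D1 : forall z i, z \in [:: c; d; e] -> ~~ adj bl rd z (fA F1 i).
  move=> z i; rewrite !in_cons in_nil orbF.
  move=> /orP [/eqP -> | /orP [/eqP -> | /eqP ->]];
  by rewrite G ?inW5 ?inV1 ?VA // ?NE ?eqxx ?n12 ?VA // (negbTE (n13 _ (VA _ _ _ _))).
have D2 : forall z i, z \in [:: a; b; e] -> ~~ adj bl rd z (fA F2 i).
  move=> z i; rewrite !in_cons in_nil orbF.
  move=> /orP [/eqP -> | /orP [/eqP -> | /eqP ->]];
  by rewrite G ?inW5 ?inV2 ?VA // ?NE ?eqxx ?n21 ?VA // (negbTE (n23 _ (VA _ _ _ _))).
have E1 : forall i, ~~ adj bl rd e (fA Fcd i) by move=> i; apply: he.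
have E2 : forall i, ~~ adj bl rd e (fA Fab i) by move=> i; apply: he.
have K1 := key bl_sym rd_sym bl_rd hs vF1 vab vcd u1 B1 C1 D1 E1.
have K2 := key bl_sym rd_sym bl_rd hs vF2 vcd vab u2 B2 C2 D2 E2.
elim => [_ | k IH hk].
  split => /merged0 eq0; [by move: nab; rewrite eq0 eqxx | by move: ncd; rewrite eq0 eqxx].
have hk' : k < size s := hk.
case: (IH (ltnW hk)) => IH1 IH2.
split => hm.
- case: (boolP (merged bl rd s k a b)) => [hmk | nab'].
    by case: (IH1 hmk) => j hj hj'; exists j => //; apply: leqW.
  case: (boolP (merged bl rd s k c d)) => [hmc | ncd'].
    by case: (IH2 hmc) => j hj hj'; exists j => //; apply: leqW.
  by exists k => //; left; apply: K1.
- case: (boolP (merged bl rd s k c d)) => [hmc | ncd'].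
    by case: (IH2 hmc) => j hj hj'; exists j => //; apply: leqW.
  case: (boolP (merged bl rd s k a b)) => [hmk | nab'].
    by case: (IH1 hmk) => j hj hj'; exists j => //; apply: leqW.
  by exists k => //; right; apply: K2.
Qed.
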